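(* For any positive integers $m > s$, $f(m,s) \ge 1/3$.
   Context: The muffin problem with $m$ muffins and $s$ students (positive integers) asks to cut each of $m$ muffins of size $1$ into finitely many pieces of positive size and to assign every piece to one of $s$ students so that each student receives pieces of total size $m/s$. $f(m,s)$ denotes the maximum, over all such divisions and assignments, of the size of the smallest piece. *)

(* Defs.v *)
From HB Require Import structures.
From mathcomp Require Import all_boot all_order all_algebra.
From mathcomp Require Import boolp classical_sets reals.

Set Implicit Arguments.
Unset Strict Implicit.
Unset Printing Implicit Defensive.

Import Order.TTheory GRing.Theory Num.Theory.
Local Open Scope ring_scope.
Local Open Scope classical_set_scope.

(* A piece: (muffin it is cut from, student it is assigned to, size). *)
Definition piece (R : realType) (m s : nat) : Type := ('I_m * 'I_s * R)%type.

Definition division (R : realType) (m s : nat) (ps : seq (piece R m s)) : Prop :=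
  (forall p, p \in ps -> 0 < p.2) /\
  (forall j : 'I_m, \sum_(p <- ps | p.1.1 == j) p.2 = 1) /\
  (forall i : 'I_s, \sum_(p <- ps | p.1.2 == i) p.2 = m%:R / s%:R).

Definition smallest_piece (R : realType) (m s : nat) (ps : seq (piece R m s)) (x : R) : Prop :=
  x \in [seq p.2 | p <- ps] /\ (forall p, p \in ps -> x <= p.2).

(* f(m,s): the supremum (= maximum, by the paper) over all divisions of the
   size of the smallest piece. *)
Definition muffin_f (R : realType) (m s : nat) : R :=
  sup [set x : R | exists ps : seq (piece R m s), division ps /\ smallest_piece ps x].

(* Main.v *)
Require Import Defs.
From mathcomp Require Import all_boot all_order all_algebra.
From mathcomp Require Import boolp classical_sets reals.
Import Order.TTheory GRing.Theory Num.Theory.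
Local Open Scope ring_scope.
From mathcomp Require Import zify ring lra.

Definition aa (s m j : nat) := ((j * (3 * m)) %% s)%N.
Definition QQ (s m j : nat) := ((j * (3 * m)) %/ s)%N.
Definition EE (s m j : nat) := (QQ s m j - 3 * j)%N.
Definition GG (y j : nat) := minn (y - 3 * j) 3.

Lemma QQ_ge s m j : (0 < s)%N -> (s <= m)%N -> (3 * j <= QQ s m j)%N.
Proof.
move=> s0 sm; rewrite /QQ.
have -> : (3 * j = (3 * j*s) %/ s)%N by rewrite mulnK.
apply: leq_div2r; rewrite -mulnA mulnCA; apply: leq_mul => //; lia.
Qed.

Lemma QQ_step s m j : (0 < s)%N -> (s <= m)%N -> (QQ s m j + 3 <= QQ s m j.+1)%N.
Proof.
move=> s0 sm; rewrite /QQ mulSn.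
have -> : (QQ s m j + 3 = (3 * s + j * (3 * m)) %/ s)%N.
  by rewrite /QQ mulnC divnMDl // addnC.
apply: leq_div2r; lia.
Qed.

Lemma EE_mono s m j k : (0 < s)%N -> (s <= m)%N -> (j <= k)%N -> (EE s m j <= EE s m k)%N.
Proof.
move=> s0 sm; elim: k => [|k IH]; first by rewrite leqn0 => /eqP ->.
rewrite leq_eqVlt => /orP[/eqP -> //|]; rewrite ltnS => /IH h.
apply: (leq_trans h); rewrite /EE.
have := @QQ_step s m k s0 sm. have := @QQ_ge s m k s0 sm. move: (QQ s m k) (QQ s m k.+1) => x y. lia.
Qed.

Lemma EE0 s m : EE s m 0 = 0%N.
Proof. by rewrite /EE /QQ mul0n div0n. Qed.

Lemma EEs s m : (0 < s)%N -> EE s m s = (3 * m - 3 * s)%N.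
Proof. by move=> s0; rewrite /EE /QQ mulnC mulnK // mulnC. Qed.

Lemma sumGG y n : (\sum_(j < n) GG y j = minn y (3 * n))%N.
Proof.
elim: n => [|n IH]; first by rewrite big_ord0 muln0 minn0.
rewrite big_ord_recr /= IH /GG. lia.
Qed.
Section M.
Variable R : realType.

Definition Wc (s m j : nat) (i : 'I_s) : R :=
  (((j == i)%:R * ((2 * s)%:R - (aa s m j)%:R) +
    (j == ordS i :> nat)%:R * (s%:R + (aa s m j)%:R)) / (3 * s)%:R).
Definition Wt (s m j : nat) (i : 'I_s) : R :=
  ((GG (EE s m i.+1) j)%:R - (GG (EE s m i) j)%:R) / 3.
Definition Wn (s m j : nat) (i : 'I_s) : R :=
  if (j < s)%N then Wc s m j i else Wt s m (j - s) i.

Lemma sum_ind (n k : nat) (F : nat -> R) : (k < n)%N ->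
  \sum_(0 <= j < n) (j == k)%:R * F j = F k.
Proof.
move=> hk; rewrite big_mkord (bigD1 (Ordinal hk)) //= eqxx mul1r big1 ?addr0 //.
move=> j hj; have /negbTE -> : (j : nat) != k.
  by apply: contra hj => /eqP h; apply/eqP/val_inj.
by rewrite mul0r.
Qed.

Lemma sum_ind_ord (n : nat) (k : 'I_n) (x : R) :
  \sum_(i < n) (k == i :> nat)%:R * x = x.
Proof.
rewrite (bigD1 k) //= eqxx mul1r big1 ?addr0 //.
move=> j hj; have /negbTE -> : (k : nat) != j.
  by rewrite eq_sym; apply: contra hj => /eqP h; apply/eqP/val_inj.
by rewrite mul0r.
Qed.

Lemma sum_ind_ordS (n : nat) (k : 'I_n) (x : R) :
  \sum_(i < n) (k == ordS i :> nat)%:R * x = x.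
Proof.
rewrite -{2}(@sum_ind_ord n k x).
rewrite [RHS](reindex_inj (@ordS_inj n)) //.
Qed.

Lemma Wn_val s m j (i : 'I_s) : (0 < s)%N -> (s <= m)%N ->
  Wn s m j i = 0 \/ 1/3 <= Wn s m j i.
Proof.
move=> s0 sm; rewrite /Wn; case: ifP => hj.
  rewrite /Wc.
  have ha : (aa s m j)%:R < s%:R :> R by rewrite ltr_nat /aa ltn_pmod.
  have hs : 0 < s%:R :> R by rewrite ltr0n.
  have ha0 : 0 <= (aa s m j)%:R :> R by apply: ler0n.
  case: (j == i); case: (j == ordS i :> nat); rewrite /= ?mul1r ?mul0r ?add0r ?addr0;
   try (by left; rewrite mul0r); right;
   rewrite ler_pdivlMr ?ltr0n ?muln_gt0 // !natrM; lra.
rewrite /Wt.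
have hle : (GG (EE s m i) (j - s) <= GG (EE s m i.+1) (j - s))%N.
  have := @EE_mono s m i i.+1 s0 sm (leqnSn _); rewrite /GG; lia.
move: hle; set x := GG _ _; set y := GG _ _ => hle.
case: (ltngtP x y) => hxy.
- right; have : (x.+1 <= y)%N by [].
  rewrite -(ler_nat R) -addn1 natrD => h; lra.
- by move: hle; rewrite leqNgt hxy.
- by left; rewrite hxy subrr mul0r.
Qed.


Lemma Wn_row s m (j : nat) : (0 < s)%N -> (s <= m)%N -> (j < m)%N ->
  \sum_(i < s) Wn s m j i = 1.
Proof.
move=> s0 sm jm; rewrite /Wn; case hj: (j < s)%N.
  rewrite /Wc -mulr_suml big_split /= -!mulr_suml.
  have -> : \sum_(i < s) (j == i :> nat)%:R = 1 :> R.
    by rewrite -[RHS](@sum_ind_ord s (Ordinal hj) 1); apply: eq_bigr => i _; rewrite mulr1.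
  have -> : \sum_(i < s) (j == ordS i :> nat)%:R = 1 :> R.
    by rewrite -[RHS](@sum_ind_ordS s (Ordinal hj) 1); apply: eq_bigr => i _; rewrite mulr1.
  rewrite !mul1r natrM.
  have hs : s%:R != 0 :> R by rewrite pnatr_eq0 -lt0n.
  rewrite natrM; field; by rewrite hs.
rewrite /Wt -mulr_suml.
rewrite -(big_mkord xpredT (fun i => (GG (EE s m i.+1) (j - s))%:R - (GG (EE s m i) (j - s))%:R : R)).
rewrite telescope_sumr // EEs // EE0.
have -> : GG (3 * m - 3 * s) (j - s) = 3%N by move/negbT: hj; rewrite /GG; lia.
have -> : GG 0 (j - s) = 0%N by rewrite /GG; lia.
by rewrite subr0 divff // pnatr_eq0.
Qed.

Lemma shift_sum (a b : nat) (F : nat -> R) :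
  \sum_(a <= j < b) F j = \sum_(0 <= j < b - a) F (j + a).
Proof. by rewrite -{1}[a]add0n big_addn. Qed.

Lemma Wn_col s m (i : 'I_s) : (0 < s)%N -> (s <= m)%N ->
  \sum_(0 <= j < m) Wn s m j i = m%:R / s%:R.
Proof.
move=> s0 sm.
rewrite (big_cat_nat (n := s)) //=.
rewrite (eq_big_nat _ _ (F2 := fun j => Wc s m j i)); last first.
  by move=> j /andP[_ hj]; rewrite /Wn hj.
rewrite [X in _ + X](eq_big_nat _ _ (F2 := fun j => Wt s m (j - s) i)); last first.
  by move=> j /andP[hj _]; rewrite /Wn ltnNge hj.
rewrite (shift_sum s m (fun j => Wt s m (j - s) i)).
under [X in _ + X]eq_bigr do rewrite addnK.
rewrite /Wc -mulr_suml big_split /=.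
rewrite sum_ind // sum_ind ?ltn_pmod //.
rewrite /Wt -mulr_suml sumrB -!natr_sum.
rewrite !big_mkord !sumGG.
have hE1 : (EE s m i.+1 <= 3 * (m - s))%N.
  have := @EE_mono s m i.+1 s s0 sm (ltn_ord i); rewrite EEs //; lia.
have hE0 : (EE s m i <= 3 * (m - s))%N.
  have := @EE_mono s m i i.+1 s0 sm (leqnSn _); lia.
rewrite (minn_idPl hE1) (minn_idPl hE0).
have -> : aa s m (i.+1 %% s) = aa s m i.+1 by rewrite /aa modnMml.
rewrite /EE !natrB ?QQ_ge //.
have h : (QQ s m i.+1 * s + aa s m i.+1 = QQ s m i * s + aa s m i + 3 * m)%N.
  by rewrite /QQ /aa -!divn_eq mulSn addnC.
rewrite -addn1 in h.
have {h} := congr1 (fun n => n%:R : R) h; rewrite !natrD !natrM /= => h.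
have hs : s%:R != 0 :> R by rewrite pnatr_eq0 -lt0n.
rewrite -addn1 ?natrM ?natrD.
move: h; set A := (aa s m i)%:R; set B := (aa s m (i+1))%:R; set P := (QQ s m i)%:R; set P1 := (QQ s m (i+1))%:R; set S := s%:R; set M := m%:R => h.
have -> : M = (P1 * S + B - P * S - A) / 3 by rewrite h; field.
have hsp : 0 < S by rewrite ltr0n.
field; rewrite hs /=; apply/negP => /eqP; lra.
Qed.

End M.
Lemma exists_min (R : realType) (r : seq R) : r != [::] ->
  exists x, x \in r /\ forall y, y \in r -> x <= y.
Proof.
elim: r => [//|a r IH] _.
case: r IH => [|b r] IH.
  by exists a; split => [|y]; rewrite ?mem_head // inE => /eqP ->.
have [x [xin xmin]] := IH isT.
case: (leP a x) => hax.
  exists a; split; first by rewrite mem_head.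
  move=> y; rewrite inE => /orP[/eqP -> //|/xmin]; exact: le_trans.
exists x; split; first by rewrite inE xin orbT.
move=> y; rewrite inE => /orP[/eqP -> |/xmin //]; exact: ltW.
Qed.

Lemma le_sum_mem (R : realType) (T : eqType) (r : seq T) (P : pred T) (F : T -> R) p :
  p \in r -> P p -> (forall q, q \in r -> 0 <= F q) ->
  F p <= \sum_(q <- r | P q) F q.
Proof.
elim: r => [//|a r IH]; rewrite inE => /orP[/eqP <-|pin] Pp hpos.
  rewrite big_cons Pp lerDl big_seq_cond sumr_ge0 // => q /andP[qin _].
  by apply: hpos; rewrite inE qin orbT.
rewrite big_cons; have h : F p <= \sum_(q <- r | P q) F q.
  by apply: IH => // q qin; apply: hpos; rewrite inE qin orbT.
case: ifP => // _; apply: (le_trans h); rewrite lerDr; apply: hpos; exact: mem_head.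
Qed.

Lemma sum_pick (R : realType) (n : nat) (k : 'I_n) (F : 'I_n -> R) :
  \sum_(j < n) (j == k)%:R * F j = F k.
Proof.
rewrite (bigD1 k) //= eqxx mul1r big1 ?addr0 // => j /negbTE ->; by rewrite mul0r.
Qed.

Theorem lemma8 (R : realType) (m s : nat) (hs : (0 < s)%N) (hms : (s < m)%N) :
  (1 / 3 : R) <= muffin_f R m s.
Proof.
have sm : (s <= m)%N by apply: ltnW.
pose W (j : 'I_m) (i : 'I_s) : R := Wn R s m j i.
have Wv : forall j i, W j i = 0 \/ 1/3 <= W j i by move=> j i; exact: Wn_val.
have W0 : forall j i, 0 <= W j i by move=> j i; case: (Wv j i) => [->|h] //; lra.
pose L := [seq (j, i, W j i) | j <- index_enum 'I_m, i <- index_enum 'I_s].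
pose ps : seq (piece R m s) := [seq p <- L | 0 < p.2].
have key : forall (P : 'I_m -> 'I_s -> bool),
    \sum_(p <- ps | P p.1.1 p.1.2) p.2 = \sum_(j < m) \sum_(i < s) (P j i)%:R * W j i.
  move=> P; rewrite big_filter_cond big_mkcond /L big_allpairs_dep /=.
  apply: eq_bigr => j _; apply: eq_bigr => i _.
  case: (P j i); rewrite ?andbT ?andbF ?mul1r ?mul0r //.
  by case: ifP => // /negbT; rewrite -leNgt => h; apply/eqP; rewrite eq_le h W0.
have hdiv : division ps.
  split; first by move=> p; rewrite mem_filter => /andP[].
  split.
    move=> j0; rewrite (key (fun j _ => j == j0)).
    under eq_bigr do rewrite -mulr_sumr.
    rewrite sum_pick; exact: Wn_row.
  move=> i0; rewrite (key (fun _ i => i == i0)) exchange_big /=.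
  under eq_bigr do rewrite -mulr_sumr.
  rewrite sum_pick -(big_mkord xpredT (fun j => Wn R s m j i0)); exact: Wn_col.
have psne : [seq p.2 | p <- ps] != [::].
  apply/negP => /eqP h; move: hdiv => [_ [hm _]].
  have e : ps = [::] by apply/eqP; rewrite -size_eq0 -(size_map (fun p => p.2)) h.
  have := hm (Ordinal (leq_trans hs sm)).
  by rewrite e big_nil => /eqP; rewrite eq_sym oner_eq0.
have [x [xin xmin]] := @exists_min R _ psne.
have hsm : smallest_piece ps x.
  split => // p pin; apply: xmin; exact: map_f.
have x3 : 1/3 <= x.
  move: xin => /mapP [p pin ->]; move: pin; rewrite mem_filter.
  move=> /andP[p0 /allpairsP [[j i] [_ _ e]]]; subst p; move: p0 => /= p0.
  case: (Wv j i) => h; last exact: h.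
  by move: p0; rewrite h => p0; lra.
apply: (le_trans x3); apply: sup_upper_bound; last by exists ps.
split; first by exists x; exists ps.
exists 1 => y [qs [[qpos [qm _]] [yin _]]].
move: yin => /mapP [q qin ->].
rewrite -(qm q.1.1); apply: le_sum_mem => // r rin; apply: ltW; exact: qpos.
Qed.
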